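(* Let $F_N:\mathbb{R}^n\to\mathbb{R}$ be the function computed by a feedforward ReLU network (as described in the context), let $P=\{\mathbf{x}\in\mathbb{R}^n : A\mathbf{x}\le \mathbf{c}\}$ be a nonempty compact polyhedron, and let $\delta>0$. Suppose the procedures LocalSearch and GlobalSearch satisfy properties (P1) and (P2) described in the context. Then the algorithm FindUpperBound$(F_N,P,\delta)$ described in the context always terminates, and the value $u$ it returns satisfies $$u^*\le u\le u^*+\delta,\qquad\text{where } u^*=\max_{\mathbf{x}\in P}F_N(\mathbf{x}).$$
   Context: Network: integers $n,k,N\ge 1$; matrices $W_0\in\mathbb{R}^{N\times n}$, $W_i\in\mathbb{R}^{N\times N}$ for $1\le i\le k-1$, $W_k\in\mathbb{R}^{1\times N}$ and vectors $\mathbf{b}_0,\dots,\mathbf{b}_{k-1}\in\mathbb{R}^N$, $b_k\in\mathbb{R}$. Let $\sigma(z)=\max(z,0)$, applied componentwise to vectors. For input $\mathbf{x}\in\mathbb{R}^n$ set $\mathbf{z}_0=\mathbf{x}$, $\mathbf{z}_{i+1}=\sigma(W_i\mathbf{z}_i+\mathbf{b}_i)$ for $i=0,\dots,k-1$, and $F_N(\mathbf{x})=W_k\mathbf{z}_k+b_k$. Property (P1): given $\mathbf{x}\in P$, LocalSearch$(\mathbf{x})$ returns a pair $(\mathbf{x}',u')$ with $\mathbf{x}'\in P$, $u'=F_N(\mathbf{x}')$ and $F_N(\mathbf{x}')\ge F_N(\mathbf{x})$. Property (P2): given a real number $u$, GlobalSearch$(u)$ either declares ''feasible'' and returns $(\mathbf{x}',u')$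 with $\mathbf{x}'\in P$, $u'=F_N(\mathbf{x}')\ge u$, or declares ''not feasible'', which it does only if no $\mathbf{x}'\in P$ satisfies $F_N(\mathbf{x}')\ge u$. Algorithm FindUpperBound$(F_N,P,\delta)$: pick any $\mathbf{x}\in P$. Repeat: (1) $(\mathbf{x},u)\leftarrow$ LocalSearch$(\mathbf{x})$; (2) $u\leftarrow u+\delta$; (3) call GlobalSearch$(u)$; if it is feasible with output $(\mathbf{x}',u')$, set $(\mathbf{x},u)\leftarrow(\mathbf{x}',u')$ and repeat; otherwise stop and return $(\mathbf{x},u)$. *)

(* Defs.v *)
From HB Require Import structures.
From mathcomp Require Import all_boot all_order all_algebra.
From mathcomp Require Import all_classical all_reals all_analysis.
Set Implicit Arguments. Unset Strict Implicit. Unset Printing Implicit Defensive.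
Import Order.TTheory GRing.Theory Num.Theory.
Local Open Scope ring_scope.

Definition relu (R : realType) (N : nat) (z : 'cV[R]_N) : 'cV[R]_N :=
  \col_i Num.max (z i 0) 0.

Fixpoint hidden_layers (R : realType) (N : nat)
  (W : nat -> 'M[R]_N) (b : nat -> 'cV[R]_N) (i cnt : nat) (z : 'cV[R]_N)
  : 'cV[R]_N :=
  match cnt with
  | 0 => z
  | c.+1 => hidden_layers W b i.+1 c (relu (W i *m z + b i))
  end.

(* F_N(x) = W_k z_k + b_k, with z_1 = relu(W_0 x + b_0),
   z_{i+1} = relu(W_i z_i + b_i) for i = 1..k-1. *)
Definition relu_net (R : realType) (n N k : nat)
  (W0 : 'M[R]_(N, n)) (W : nat -> 'M[R]_N) (Wk : 'rV[R]_N)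
  (b : nat -> 'cV[R]_N) (bk : R) (x : 'cV[R]_n) : R :=
  (Wk *m hidden_layers W b 1 (k.-1) (relu (W0 *m x + b 0%N))) 0 0 + bk.

Definition polyhedron (R : realType) (m n : nat) (A : 'M[R]_(m, n))
  (c : 'cV[R]_m) : set 'cV[R]_n :=
  [set x | forall i : 'I_m, (A *m x) i 0 <= c i 0].

Definition local_search_spec (R : realType) (n : nat) (P : set 'cV[R]_n)
  (F : 'cV[R]_n -> R) (LS : 'cV[R]_n -> 'cV[R]_n * R) : Prop :=
  forall x, P x -> P (LS x).1 /\ (LS x).2 = F (LS x).1 /\ F x <= F (LS x).1.

(* (P2): Some (x', u') = "feasible", None = "not feasible" *)
Definition global_search_spec (R : realType) (n : nat) (P : set 'cV[R]_n)
  (F : 'cV[R]_n -> R) (GS : R -> option ('cV[R]_n * R)) : Prop :=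
  forall u,
    match GS u with
    | Some (x', u') => P x' /\ u' = F x' /\ u <= u'
    | None => ~ (exists x', P x' /\ u <= F x')
    end.

(* FindUpperBound run with a budget of [fuel] loop iterations, starting from
   the current point x.  Returns Some (x, u) if the algorithm stops within
   the budget, None if the budget is exhausted. *)
Fixpoint find_upper_bound (R : realType) (n : nat)
  (LS : 'cV[R]_n -> 'cV[R]_n * R) (GS : R -> option ('cV[R]_n * R))
  (delta : R) (fuel : nat) (x : 'cV[R]_n) : option ('cV[R]_n * R) :=
  match fuel with
  | 0 => None
  | f.+1 =>
      let xu := LS x in
      let u := xu.2 + delta in
      match GS u with
      | Some (x', u') => find_upper_bound LS GS delta f x'
      | None => Some (xu.1, u)
      end
  end.

Definition is_max_on (R : realType) (n : nat) (P : set 'cV[R]_n)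
  (F : 'cV[R]_n -> R) (m : R) : Prop :=
  (exists x, P x /\ F x = m) /\ (forall x, P x -> F x <= m).

(* Main.v *)
Require Import Defs.
From HB Require Import structures.
From mathcomp Require Import all_boot all_order all_algebra.
From mathcomp Require Import all_classical all_reals all_analysis.
From mathcomp Require Import lra.
Import Order.TTheory GRing.Theory Num.Theory.
Import numFieldTopology.Exports.
Local Open Scope ring_scope.


Lemma sum_cont (R : realType) (T : topologicalType) (I : finType) (h : I -> T -> R) :
  (forall i, continuous (h i)) -> continuous (fun x => \sum_i h i x).
Proof.
move=> hc.
rewrite (_ : (fun x => _) = \sum_i h i); last by apply/funext=> x; rewrite fct_sumE.
elim/big_ind: _ => //.
- exact: cst_continuous.
- by move=> f g cf cg x; apply: cvgD; [exact: cf|exact: cg].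
Qed.

Lemma mulc_cont (R : realType) (T : topologicalType) (a : R) (h : T -> R) :
  continuous h -> continuous (fun x => a * h x).
Proof. by move=> hc x; apply: cvgM; [exact: cvg_cst|exact: hc]. Qed.

Lemma addc_cont (R : realType) (T : topologicalType) (a : R) (h : T -> R) :
  continuous h -> continuous (fun x => h x + a).
Proof. by move=> hc x; apply: cvgD; [exact: hc|exact: cvg_cst]. Qed.

Lemma relu_cont (R : realType) (T : topologicalType) (h : T -> R) :
  continuous h -> continuous (fun x => Num.max (h x) 0).
Proof.
move=> hc x.
have := @continuous_max _ T h (fun _ => 0) x (hc x) (@cvg_cst _ (0:R) _ _ _).
move=> H; exact: H.
Qed.

Lemma layer_cont (R : realType) (T : topologicalType) N n0 (M : 'M[R]_(N, n0)) (bb : 'cV[R]_N)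
  (g : T -> 'cV[R]_n0) :
  (forall j, continuous (fun x => g x j 0)) ->
  forall j, continuous (fun x => relu (M *m g x + bb) j 0).
Proof.
move=> gc j.
rewrite (_ : (fun x => _) = fun x => Num.max (\sum_k M j k * g x k 0 + bb j 0) 0); last first.
  by apply/funext => x; rewrite /relu !mxE; congr (Num.max _ _); rewrite !mxE.
apply: relu_cont; apply: addc_cont; apply: sum_cont => k; exact: mulc_cont.
Qed.

Lemma hidden_cont (R : realType) (T : topologicalType) N (W : nat -> 'M[R]_N) (b : nat -> 'cV[R]_N)
  cnt : forall i (g : T -> 'cV[R]_N),
  (forall j, continuous (fun x => g x j 0)) ->
  forall j, continuous (fun x => hidden_layers W b i cnt (g x) j 0).
Proof.
elim: cnt => [//|c IH] i g gc j /=.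
apply: (IH i.+1 (fun x => relu (W i *m g x + b i))) => j0; exact: layer_cont.
Qed.

Lemma net_cont (R : realType) n k N (W0 : 'M[R]_(N, n)) (W : nat -> 'M[R]_N) (Wk : 'rV[R]_N)
  (b : nat -> 'cV[R]_N) (bk : R) : continuous (relu_net k W0 W Wk b bk).
Proof.
rewrite /relu_net.
rewrite (_ : (fun x => _) = fun x => \sum_j Wk 0 j *
   hidden_layers W b 1 k.-1 (relu (W0 *m x + b 0%N)) j 0 + bk); last first.
  by apply/funext => x; rewrite !mxE.
apply: addc_cont; apply: sum_cont => j; apply: mulc_cont.
apply: (hidden_cont _ _ _ W b k.-1 1 (fun x => relu (W0 *m x + b 0%N))).
apply: layer_cont => j'; exact: coord_continuous.
Qed.

Theorem mainTheorem1 (R : realType) (n k N m : nat)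
  (W0 : 'M[R]_(N, n)) (W : nat -> 'M[R]_N) (Wk : 'rV[R]_N)
  (b : nat -> 'cV[R]_N) (bk : R)
  (A : 'M[R]_(m, n)) (c : 'cV[R]_m) (delta : R)
  (LS : 'cV[R]_n -> 'cV[R]_n * R) (GS : R -> option ('cV[R]_n * R)) :
  (1 <= n)%N -> (1 <= k)%N -> (1 <= N)%N ->
  (exists x, polyhedron A c x) ->
  compact (polyhedron A c) ->
  0 < delta ->
  local_search_spec (polyhedron A c) (relu_net k W0 W Wk b bk) LS ->
  global_search_spec (polyhedron A c) (relu_net k W0 W Wk b bk) GS ->
  forall x0, polyhedron A c x0 ->
    (exists fuel res, find_upper_bound LS GS delta fuel x0 = Some res) /\
    (forall fuel x u, find_upper_bound LS GS delta fuel x0 = Some (x, u) ->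
       exists ustar, is_max_on (polyhedron A c) (relu_net k W0 W Wk b bk) ustar /\
         ustar <= u <= ustar + delta).
Proof.
move=> _ _ _ [xP Px] cP dpos LSs GSs x0 Px0.
set P := polyhedron A c in Px cP LSs GSs Px0 *.
set F := relu_net k W0 W Wk b bk in LSs GSs *.
have Fc : continuous F by exact: net_cont.
have [xm xmP xmmax] : exists2 c0, c0 \in P & forall t, t \in P -> F t <= F c0.
  apply: compact_EVT_max => //; first by exists xP.
  exact: continuous_subspaceT.
have xmP' : P xm by rewrite inE in xmP.
have Fle : forall t, P t -> F t <= F xm by move=> t Pt; apply: xmmax; rewrite inE.
set ustar := F xm.
have term : forall f x, P x -> ustar < F x + f%:R * delta ->
    exists res, find_upper_bound LS GS delta f x = Some res.
  elim=> [|f IH] x Px'.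
    rewrite mul0r addr0 => H; have := Fle x Px'; by rewrite leNgt H.
  move=> Hlt /=.
  have [PL [L2 L3]] := LSs x Px'.
  have := GSs ((LS x).2 + delta).
  case: (GS _) => [[x' u']|] //; last by move=> _; eexists.
  move=> [Px'' [-> Hu]]; apply: IH => //.
  apply: (lt_le_trans Hlt).
  rewrite -natr1 mulrDl mul1r; rewrite L2 in Hu; lra.
have corr : forall f x, P x -> forall x1 u, find_upper_bound LS GS delta f x = Some (x1, u) ->
    ustar <= u <= ustar + delta.
  elim=> [//|f IH] x Px' x1 u /=.
  have [PL [L2 L3]] := LSs x Px'.
  have := GSs ((LS x).2 + delta).
  case: (GS _) => [[x' u']|].
    by move=> [Px'' _]; apply: IH.
  move=> Hn [_ <-]; apply/andP; split.
    rewrite leNgt; apply/negP => Hl; apply: Hn; exists xm; split => //.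
    exact: ltW.
  by rewrite lerD2r L2; apply: Fle.
split.
  have [f Hf] : exists f : nat, (ustar - F x0) / delta < f%:R.
    exists (Num.truncn ((ustar - F x0) / delta)).+1.
    exact: truncnS_gt.
  have Hlt : ustar < F x0 + f%:R * delta.
    by rewrite -ltrBlDl -ltr_pdivrMr.
  have [res Hres] := term f x0 Px0 Hlt; by exists f, res.
move=> f x u H; exists ustar; split; last exact: corr H.
split; first by exists xm.
exact: Fle.
Qed.
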